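(* Let $M\in\mathbb{R}^{p\times q}_+$ be a nonnegative matrix with $\operatorname{rank}_{\mathrm{psd}}(M)=2$ and $\operatorname{rank}(M)=3$. Then the quotient space $\mathcal{SF}(M)/GL(2)$ is connected. *)

(* Defs.v *)
From Stdlib Require Import Reals List.
Open Scope R_scope.

Fixpoint fsum (n : nat) (f : nat -> R) : R :=
  match n with O => 0 | S n' => fsum n' f + f n' end.

(* A k x k real matrix is represented by its entries A a b for a, b < k. *)
Definition kmat := nat -> nat -> R.

Definition psd_k (k : nat) (A : kmat) : Prop :=
  (forall a b, (a < k)%nat -> (b < k)%nat -> A a b = A b a) /\
  (forall x : nat -> R, 0 <= fsum k (fun a => fsum k (fun b => x a * A a b * x b))).

Definition kinner (k : nat) (A B : kmat) : R :=
  fsum k (fun a => fsum k (fun b => A a b * B b a)).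

Definition nonneg_mat (p q : nat) (M : nat -> nat -> R) : Prop :=
  forall i j, (i < p)%nat -> (j < q)%nat -> 0 <= M i j.

Definition has_psd_fact (p q : nat) (M : nat -> nat -> R) (k : nat) : Prop :=
  exists (A B : nat -> kmat),
    (forall i, (i < p)%nat -> psd_k k (A i)) /\
    (forall j, (j < q)%nat -> psd_k k (B j)) /\
    (forall i j, (i < p)%nat -> (j < q)%nat -> M i j = kinner k (A i) (B j)).

Definition psd_rank_eq (p q : nat) (M : nat -> nat -> R) (r : nat) : Prop :=
  has_psd_fact p q M r /\ (forall k, (k < r)%nat -> ~ has_psd_fact p q M k).

Definition cols_indep (p : nat) (M : nat -> nat -> R) (js : list nat) : Prop :=
  forall c : nat -> R,
    (forall i, (i < p)%nat ->
       fsum (length js) (fun t => c t * M i (nth t js O)) = 0) ->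
    forall t, (t < length js)%nat -> c t = 0.

Definition rank_eq (p q : nat) (M : nat -> nat -> R) (r : nat) : Prop :=
  (exists js, length js = r /\ Forall (fun j => (j < q)%nat) js /\ cols_indep p M js) /\
  (forall js, length js = S r -> Forall (fun j => (j < q)%nat) js -> ~ cols_indep p M js).

Record Mat2 := mk2 { e11 : R; e12 : R; e21 : R; e22 : R }.

Definition mul2 (X Y : Mat2) : Mat2 :=
  mk2 (e11 X * e11 Y + e12 X * e21 Y) (e11 X * e12 Y + e12 X * e22 Y)
      (e21 X * e11 Y + e22 X * e21 Y) (e21 X * e12 Y + e22 X * e22 Y).
Definition tr2 (X : Mat2) : Mat2 := mk2 (e11 X) (e21 X) (e12 X) (e22 X).
Definition det2 (X : Mat2) : R := e11 X * e22 X - e12 X * e21 X.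
Definition inv2 (X : Mat2) : Mat2 :=
  mk2 (e22 X / det2 X) (- e12 X / det2 X) (- e21 X / det2 X) (e11 X / det2 X).
Definition zero2 : Mat2 := mk2 0 0 0 0.
Definition trace2 (X : Mat2) : R := e11 X + e22 X.

Definition psd2 (X : Mat2) : Prop :=
  e12 X = e21 X /\
  forall x y : R, 0 <= x * (e11 X * x + e12 X * y) + y * (e21 X * x + e22 X * y).

Definition inner2 (X Y : Mat2) : R := trace2 (mul2 X Y).

(* A point is a pair (A, B) of families of 2x2 matrices A_1..A_p, B_1..B_q;
   entries with index >= p (resp. >= q) are required to be 0 so that a point
   is exactly an element of (S^2)^(p+q). *)
Definition fact2 : Type := ((nat -> Mat2) * (nat -> Mat2))%type.

Definition SF (p q : nat) (M : nat -> nat -> R) (P : fact2) : Prop :=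
  let (A, B) := P in
  (forall i, (i < p)%nat -> psd2 (A i)) /\
  (forall j, (j < q)%nat -> psd2 (B j)) /\
  (forall i, (p <= i)%nat -> A i = zero2) /\
  (forall j, (q <= j)%nat -> B j = zero2) /\
  (forall i j, (i < p)%nat -> (j < q)%nat -> M i j = inner2 (A i) (B j)).

Definition GL2 (g : Mat2) : Prop := det2 g <> 0.
Definition act (g : Mat2) (P : fact2) : fact2 :=
  (fun i => mul2 (tr2 g) (mul2 (fst P i) g),
   fun j => mul2 (inv2 g) (mul2 (snd P j) (tr2 (inv2 g)))).

(* Euclidean topology on (S^2)^(p+q) via the l1 distance on entries *)
Definition mdist2 (X Y : Mat2) : R :=
  Rabs (e11 X - e11 Y) + Rabs (e12 X - e12 Y) + Rabs (e21 X - e21 Y) + Rabs (e22 X - e22 Y).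
Definition fdist (p q : nat) (P Q : fact2) : R :=
  fsum p (fun i => mdist2 (fst P i) (fst Q i)) + fsum q (fun j => mdist2 (snd P j) (snd Q j)).

Definition rel_open (p q : nat) (X U : fact2 -> Prop) : Prop :=
  forall P, X P -> U P ->
    exists eps, 0 < eps /\ forall Q, X Q -> fdist p q P Q < eps -> U Q.

Definition GL2_invariant (U : fact2 -> Prop) : Prop :=
  forall g P, GL2 g -> U P -> U (act g P).

(* X/GL(2) is connected (quotient topology): the open sets of X/GL(2) are the
   images of the GL(2)-invariant relatively open subsets of X, so connectedness
   means X is not the disjoint union of two nonempty invariant open subsets. *)
Definition quotient_GL2_connected (p q : nat) (X : fact2 -> Prop) : Prop :=
  ~ exists U V : fact2 -> Prop,
      rel_open p q X U /\ rel_open p q X V /\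
      GL2_invariant U /\ GL2_invariant V /\
      (exists P, X P /\ U P) /\ (exists P, X P /\ V P) /\
      (forall P, X P -> U P \/ V P) /\
      (forall P, X P -> U P -> V P -> False).

(* Main.v *)
Require Import Defs.
From Stdlib Require Import Reals List Lra Lia Psatz FunctionalExtensionality Classical.
Open Scope R_scope.

Lemma fsum_ext n f g : (forall i, (i < n)%nat -> f i = g i) -> fsum n f = fsum n g.
Proof. induction n; simpl; intros; auto. rewrite IHn by (intros; apply H; lia). rewrite H by lia. auto. Qed.

Lemma fsum_plus n f g : fsum n (fun i => f i + g i) = fsum n f + fsum n g.
Proof. induction n; simpl; [lra|]. rewrite IHn. lra. Qed.

Lemma fsum_scal n c f : fsum n (fun i => c * f i) = c * fsum n f.
Proof. induction n; simpl; [lra|]. rewrite IHn. lra. Qed.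

Lemma fsum_zero n : fsum n (fun _ => 0) = 0.
Proof. induction n; simpl; lra. Qed.

Lemma fsum_nonneg n f : (forall i, (i < n)%nat -> 0 <= f i) -> 0 <= fsum n f.
Proof. induction n; simpl; intros; [lra|]. assert (0 <= fsum n f) by (apply IHn; intros; apply H; lia). assert (0 <= f n) by (apply H; lia). lra. Qed.

Lemma fsum_nonneg_zero n f : (forall i, (i < n)%nat -> 0 <= f i) -> fsum n f = 0 ->
  forall i, (i < n)%nat -> f i = 0.
Proof. induction n; simpl; intros; [lia|].
  assert (0 <= fsum n f) by (apply fsum_nonneg; intros; apply H; lia).
  assert (0 <= f n) by (apply H; lia).
  destruct (Nat.eq_dec i n). subst; lra.
  apply IHn; [intros; apply H; lia | lra | lia]. Qed.

Record V3 := v3 { x0 : R; x1 : R; x2 : R }.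
Definition dot3 (a b : V3) := x0 a * x0 b + x1 a * x1 b + x2 a * x2 b.
Definition inK (a : V3) := 0 <= x0 a /\ x1 a * x1 a + x2 a * x2 a <= x0 a * x0 a.
Definition zero3 := v3 0 0 0.
Definition e0 := v3 1 0 0.

Definition conv (X : Mat2) : V3 := v3 ((e11 X + e22 X)/2) ((e11 X - e22 X)/2) (e12 X).
Definition back (x : V3) : Mat2 := mk2 (x0 x + x1 x) (x2 x) (x2 x) (x0 x - x1 x).

Lemma V3_eq a b : x0 a = x0 b -> x1 a = x1 b -> x2 a = x2 b -> a = b.
Proof. destruct a, b; simpl; intros; subst; auto. Qed.
Lemma Mat2_eq a b : e11 a = e11 b -> e12 a = e12 b -> e21 a = e21 b -> e22 a = e22 b -> a = b.
Proof. destruct a, b; simpl; intros; subst; auto. Qed.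

Lemma back_conv X : e12 X = e21 X -> back (conv X) = X.
Proof. intros; apply Mat2_eq; unfold back, conv; simpl; try lra. Qed.
Lemma conv_back x : conv (back x) = x.
Proof. apply V3_eq; unfold back, conv; simpl; lra. Qed.
Lemma back_zero : back zero3 = zero2.
Proof. apply Mat2_eq; unfold back; simpl; lra. Qed.
Lemma conv_zero : conv zero2 = zero3.
Proof. apply V3_eq; unfold conv; simpl; lra. Qed.

Lemma inner2_back x y : inner2 (back x) (back y) = 2 * dot3 x y.
Proof. unfold inner2, trace2, mul2, back, dot3; simpl; ring. Qed.

Lemma inner2_conv X Y : e12 X = e21 X -> e12 Y = e21 Y -> inner2 X Y = 2 * dot3 (conv X) (conv Y).
Proof. intros. rewrite <- (back_conv X) at 1 by auto. rewrite <- (back_conv Y) at 1 by auto. apply inner2_back. Qed.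

Lemma psd2_inK x : psd2 (back x) <-> inK x.
Proof. destruct x as [u v w]. unfold psd2, inK, back; simpl; split.
- intros [_ H].
  pose proof (H 1 0) as H1. pose proof (H 0 1) as H2.
  assert (u0 : 0 <= u) by nra. split; auto.
  destruct (Req_dec (u + v) 0).
  + destruct (Req_dec (u - v) 0).
    * assert (u = 0) by lra. assert (v = 0) by lra. subst.
      pose proof (H 1 w). pose proof (H 1 (- w)). nra.
    * pose proof (H (-(u - v)) w). nra.
  + pose proof (H w (-(u + v))). nra.
- intros [H1 H2]. split; auto. intros a b.
  assert (Hv : v * v <= u * u) by nra.
  assert (0 <= u + v) by nra.
  destruct (Req_dec (u + v) 0).
  + assert (w * w <= 0) by nra. assert (w = 0) by nra. subst w.
    assert (0 <= u - v) by nra. nra.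
  + assert (E: (u + v) * ((u + v) * a * a + 2 * w * a * b + (u - v) * b * b)
        = ((u + v) * a + w * b)^2 + (u * u - v * v - w * w) * b * b) by ring.
    assert (0 <= (u + v) * ((u + v) * a * a + 2 * w * a * b + (u - v) * b * b)).
    { rewrite E. assert (0 <= (u * u - v * v - w * w) * (b * b)) by (apply Rmult_le_pos; nra).
      pose proof (pow2_ge_0 ((u + v) * a + w * b)). nra. }
    assert (0 <= (u + v) * a * a + 2 * w * a * b + (u - v) * b * b).
    { apply (Rmult_le_reg_l (u + v)); lra. }
    nra.
Qed.

Lemma psd2_sym X : psd2 X -> e12 X = e21 X.
Proof. intros [H _]; auto. Qed.

Lemma psd2_conv X : psd2 X -> inK (conv X).
Proof. intros H. apply psd2_inK. rewrite back_conv; auto. apply psd2_sym; auto. Qed.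

Lemma inK_dot a b : inK a -> inK b -> 0 <= dot3 a b.
Proof. unfold inK, dot3; intros [H1 H2] [H3 H4].
  assert ((x1 a * x1 b + x2 a * x2 b)^2 <= (x0 a * x0 b)^2).
  { assert ((x1 a * x1 b + x2 a * x2 b)^2 <= (x1 a * x1 a + x2 a * x2 a) * (x1 b * x1 b + x2 b * x2 b)).
    { pose proof (pow2_ge_0 (x1 a * x2 b - x2 a * x1 b)). nra. }
    assert ((x1 a * x1 a + x2 a * x2 a) * (x1 b * x1 b + x2 b * x2 b) <= (x0 a * x0 a) * (x0 b * x0 b)).
    { apply Rmult_le_compat; nra. }
    nra. }
  assert (0 <= x0 a * x0 b) by nra. nra.
Qed.

Lemma path_lemma p q (X U V : fact2 -> Prop) (g : R -> fact2) :
  rel_open p q X U -> rel_open p q X V ->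
  (forall P, X P -> U P \/ V P) -> (forall P, X P -> U P -> V P -> False) ->
  (forall t, 0 <= t <= 1 -> X (g t)) ->
  (forall t, 0 <= t <= 1 -> forall eps, 0 < eps -> exists del, 0 < del /\
     forall s, 0 <= s <= 1 -> Rabs (s - t) < del -> fdist p q (g t) (g s) < eps) ->
  U (g 0) -> U (g 1).
Proof.
  intros HU HV Hcov Hdis HX Hc H0.
  set (E := fun t => 0 <= t <= 1 /\ forall s, 0 <= s <= t -> U (g s)).
  assert (Hb : bound E) by (exists 1; intros t [Ht _]; lra).
  assert (He : exists x, E x).
  { exists 0. split; [lra|]. intros s Hs. replace s with 0 by lra. auto. }
  destruct (completeness E Hb He) as [m [Hub Hlub]].
  assert (Hm0 : 0 <= m) by (apply Hub; destruct He; split; [lra|]; intros s Hs; replace s with 0 by lra; auto).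
  assert (Hm1 : m <= 1) by (apply Hlub; intros t [Ht _]; lra).
  assert (Hbelow : forall s, 0 <= s < m -> U (g s)).
  { intros s Hs. apply NNPP; intro HnU.
    assert (m <= s); [|lra].
    apply Hlub. intros e [He1 He2]. destruct (Rle_lt_dec e s); auto.
    exfalso. apply HnU. apply He2. lra. }
  destruct (Hcov (g m) (HX m (conj Hm0 Hm1))) as [Um|Vm].
  - destruct (Req_dec m 1) as [->|Hm]; auto.
    destruct (HU (g m) (HX m (conj Hm0 Hm1)) Um) as [eps [Heps Ho]].
    destruct (Hc m (conj Hm0 Hm1) eps Heps) as [del [Hdel Hd]].
    set (t1 := Rmin 1 (m + del/2)).
    assert (Et1 : E t1).
    { unfold t1; split. split. apply Rmin_glb; lra. apply Rmin_l.
      intros s Hs. destruct (Rlt_le_dec s m). apply Hbelow; lra.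
      assert (s <= 1) by (pose proof (Rmin_l 1 (m + del/2)); lra).
      assert (s <= m + del/2) by (pose proof (Rmin_r 1 (m + del/2)); lra).
      apply Ho. apply HX; lra. apply Hd. lra. rewrite Rabs_right; lra. }
    assert (t1 <= m) by (apply Hub; auto).
    unfold t1 in *. unfold Rmin in *. destruct (Rle_dec 1 (m + del/2)); try lra.
  - destruct (Req_dec m 0) as [Hm|Hm].
    + exfalso. subst m. apply (Hdis (g 0)); auto.
    + exfalso.
      destruct (HV (g m) (HX m (conj Hm0 Hm1)) Vm) as [eps [Heps Ho]].
      destruct (Hc m (conj Hm0 Hm1) eps Heps) as [del [Hdel Hd]].
      set (s := Rmax 0 (m - del/2)).
      assert (Hs0 : 0 <= s) by apply Rmax_l.
      assert (Hs1 : s < m) by (unfold s, Rmax; destruct (Rle_dec 0 (m - del/2)); lra).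
      assert (Hs2 : m - del/2 <= s) by apply Rmax_r.
      apply (Hdis (g s)). apply HX; lra. apply Hbelow; lra.
      apply Ho. apply HX; lra. apply Hd. lra. rewrite Rabs_left; lra.
Qed.

Lemma psd2_cong X h : psd2 X -> psd2 (mul2 (tr2 h) (mul2 X h)).
Proof. intros [Hs H]. split.
  - unfold mul2, tr2; simpl. rewrite Hs. ring.
  - intros x y. specialize (H (e11 h * x + e12 h * y) (e21 h * x + e22 h * y)).
    unfold mul2, tr2; simpl. rewrite Hs in *.
    match goal with |- 0 <= ?E => replace E with
      ((e11 h * x + e12 h * y) * (e11 X * (e11 h * x + e12 h * y) + e21 X * (e21 h * x + e22 h * y)) +
       (e21 h * x + e22 h * y) * (e21 X * (e11 h * x + e12 h * y) + e22 X * (e21 h * x + e22 h * y))) by ring end.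
    auto.
Qed.

Lemma tr2_tr2 k : tr2 (tr2 k) = k.
Proof. apply Mat2_eq; reflexivity. Qed.

Lemma cong_zero h : mul2 h (mul2 zero2 (tr2 h)) = zero2.
Proof. apply Mat2_eq; unfold mul2, zero2; simpl; ring. Qed.
Lemma cong_zero' h : mul2 (tr2 h) (mul2 zero2 h) = zero2.
Proof. apply Mat2_eq; unfold mul2, zero2; simpl; ring. Qed.

Lemma inner2_act g X Y : GL2 g ->
  inner2 (mul2 (tr2 g) (mul2 X g)) (mul2 (inv2 g) (mul2 Y (tr2 (inv2 g)))) = inner2 X Y.
Proof. unfold GL2; intros Hg. unfold inner2, trace2, mul2, tr2, inv2, det2 in *; simpl.
  field. auto. Qed.

Lemma act_SF p q M g P : GL2 g -> SF p q M P -> SF p q M (act g P).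
Proof. destruct P as [A B]. unfold SF, act; simpl.
  intros Hg [HA [HB [HA0 [HB0 HM]]]]. split; [|split; [|split; [|split]]].
  - intros i Hi. apply psd2_cong; auto.
  - intros j Hj. rewrite <- (tr2_tr2 (inv2 g)) at 1. apply psd2_cong; auto.
  - intros i Hi. rewrite HA0 by auto. apply cong_zero'.
  - intros j Hj. rewrite HB0 by auto. apply cong_zero.
  - intros i j Hi Hj. rewrite inner2_act; auto.
Qed.

Definition vadd (a b : V3) := v3 (x0 a + x0 b) (x1 a + x1 b) (x2 a + x2 b).
Definition vscal (c : R) (a : V3) := v3 (c * x0 a) (c * x1 a) (c * x2 a).
Definition cross (a b : V3) := v3 (x1 a * x2 b - x2 a * x1 b) (x2 a * x0 b - x0 a * x2 b) (x0 a * x1 b - x1 a * x0 b).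

Record M3 := m3 { col0 : V3; col1 : V3; col2 : V3 }.
Definition mv3 (B : M3) (c : V3) : V3 :=
  vadd (vadd (vscal (x0 c) (col0 B)) (vscal (x1 c) (col1 B))) (vscal (x2 c) (col2 B)).
Definition mtv3 (B : M3) (y : V3) : V3 := v3 (dot3 (col0 B) y) (dot3 (col1 B) y) (dot3 (col2 B) y).
Definition det3 (B : M3) := dot3 (col0 B) (cross (col1 B) (col2 B)).
Definition solve3 (B : M3) (X : V3) : V3 :=
  vscal (/ det3 B) (v3 (dot3 (cross (col1 B) (col2 B)) X) (dot3 (cross (col2 B) (col0 B)) X)
                      (dot3 (cross (col0 B) (col1 B)) X)).

Lemma adj_mtv B x y : dot3 (mtv3 B x) y = dot3 x (mv3 B y).
Proof. unfold mtv3, mv3, vadd, vscal, dot3; simpl; ring. Qed.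

Lemma solve3_ok B X : det3 B <> 0 -> mv3 B (solve3 B X) = X.
Proof. destruct B as [[a0 a1 a2] [b0 b1 b2] [c0 c1 c2]]; destruct X as [y0 y1 y2];
  unfold solve3, mv3, det3, vadd, vscal, cross, dot3; simpl; intros H.
  apply V3_eq; simpl; field; auto. Qed.

Lemma mtv3_inj B y : det3 B <> 0 -> mtv3 B y = zero3 -> y = zero3.
Proof. destruct B as [[a0 a1 a2] [b0 b1 b2] [c0 c1 c2]]; destruct y as [y0 y1 y2];
  unfold mtv3, det3, cross, dot3, zero3; simpl; intros H E. injection E; intros E2 E1 E0.
  apply V3_eq; simpl.
  - apply (Rmult_eq_reg_l (a0 * (b1 * c2 - b2 * c1) + a1 * (b2 * c0 - b0 * c2) + a2 * (b0 * c1 - b1 * c0))); auto.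
    rewrite Rmult_0_r.
    transitivity ((a0 * y0 + a1 * y1 + a2 * y2) * (b1 * c2 - b2 * c1) + (b0 * y0 + b1 * y1 + b2 * y2) * (c1 * a2 - c2 * a1) + (c0 * y0 + c1 * y1 + c2 * y2) * (a1 * b2 - a2 * b1)).
    ring. rewrite E0, E1, E2; ring.
  - apply (Rmult_eq_reg_l (a0 * (b1 * c2 - b2 * c1) + a1 * (b2 * c0 - b0 * c2) + a2 * (b0 * c1 - b1 * c0))); auto.
    rewrite Rmult_0_r.
    transitivity ((a0 * y0 + a1 * y1 + a2 * y2) * (b2 * c0 - b0 * c2) + (b0 * y0 + b1 * y1 + b2 * y2) * (c2 * a0 - c0 * a2) + (c0 * y0 + c1 * y1 + c2 * y2) * (a2 * b0 - a0 * b2)).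
    ring. rewrite E0, E1, E2; ring.
  - apply (Rmult_eq_reg_l (a0 * (b1 * c2 - b2 * c1) + a1 * (b2 * c0 - b0 * c2) + a2 * (b0 * c1 - b1 * c0))); auto.
    rewrite Rmult_0_r.
    transitivity ((a0 * y0 + a1 * y1 + a2 * y2) * (b0 * c1 - b1 * c0) + (b0 * y0 + b1 * y1 + b2 * y2) * (c0 * a1 - c1 * a0) + (c0 * y0 + c1 * y1 + c2 * y2) * (a0 * b1 - a1 * b0)).
    ring. rewrite E0, E1, E2; ring.
Qed.

Lemma ker3 B : det3 B = 0 -> exists c, c <> zero3 /\ mv3 B c = zero3.
Proof. destruct B as [[a0 a1 a2] [b0 b1 b2] [c0 c1 c2]];
  unfold mv3, det3, vadd, vscal, cross, dot3, zero3; simpl; intros H.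
  set (u0 := b1 * c2 - b2 * c1). set (u1 := b2 * c0 - b0 * c2). set (u2 := b0 * c1 - b1 * c0).
  set (v0 := c1 * a2 - c2 * a1). set (v1 := c2 * a0 - c0 * a2). set (v2 := c0 * a1 - c1 * a0).
  set (w0 := a1 * b2 - a2 * b1). set (w1 := a2 * b0 - a0 * b2). set (w2 := a0 * b1 - a1 * b0).
  assert (HH : forall c : V3, (x0 c <> 0 \/ x1 c <> 0 \/ x2 c <> 0) ->
     x0 c * a0 + x1 c * b0 + x2 c * c0 = 0 -> x0 c * a1 + x1 c * b1 + x2 c * c1 = 0 ->
     x0 c * a2 + x1 c * b2 + x2 c * c2 = 0 ->
     exists cc : V3, cc <> v3 0 0 0 /\
       v3 (x0 cc * a0 + x1 cc * b0 + x2 cc * c0) (x0 cc * a1 + x1 cc * b1 + x2 cc * c1)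
          (x0 cc * a2 + x1 cc * b2 + x2 cc * c2) = v3 0 0 0).
  { intros c Hc E0 E1 E2. exists c. split.
    - intro Hz; rewrite Hz in Hc; simpl in Hc; lra.
    - rewrite E0, E1, E2; auto. }
  destruct (Req_dec u0 0); [destruct (Req_dec v0 0); [destruct (Req_dec w0 0)|]|].
  2,3,4: apply (HH (v3 u0 v0 w0)); simpl; [tauto| | |]; unfold u0,v0,w0 in *; nra.
  destruct (Req_dec u1 0); [destruct (Req_dec v1 0); [destruct (Req_dec w1 0)|]|].
  2,3,4: apply (HH (v3 u1 v1 w1)); simpl; [tauto| | |]; unfold u1,v1,w1 in *; nra.
  destruct (Req_dec u2 0); [destruct (Req_dec v2 0); [destruct (Req_dec w2 0)|]|].
  2,3,4: apply (HH (v3 u2 v2 w2)); simpl; [tauto| | |]; unfold u2,v2,w2 in *; nra.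
  unfold u0,u1,u2,v0,v1,v2,w0,w1,w2 in *.
  destruct (Req_dec a0 0); [destruct (Req_dec a1 0); [destruct (Req_dec a2 0)|]|].
  - apply (HH (v3 1 0 0)); simpl; [lra| | |]; subst; ring.
  - apply (HH (v3 b2 (-a2) 0)); simpl; [lra| | |]; nra.
  - apply (HH (v3 b1 (-a1) 0)); simpl; [lra| | |]; nra.
  - apply (HH (v3 b0 (-a0) 0)); simpl; [lra| | |]; nra.
Qed.

Definition Bmat (B : nat -> Mat2) (j1 j2 j3 : nat) := m3 (conv (B j1)) (conv (B j2)) (conv (B j3)).

Lemma dot_mv a B c : dot3 a (mv3 B c) = x0 c * dot3 a (col0 B) + x1 c * dot3 a (col1 B) + x2 c * dot3 a (col2 B).
Proof. unfold mv3, vadd, vscal, dot3; simpl; ring. Qed.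

Definition cf (c : V3) (t : nat) := match t with O => x0 c | S O => x1 c | _ => x2 c end.

Section Span.
Variables (p q : nat) (M : nat -> nat -> R) (j1 j2 j3 : nat).
Hypothesis Hind : cols_indep p M (j1 :: j2 :: j3 :: nil).
Hypothesis Hj1 : (j1 < q)%nat.
Hypothesis Hj2 : (j2 < q)%nat.
Hypothesis Hj3 : (j3 < q)%nat.

Lemma Mij_dot A B i j : SF p q M (A, B) -> (i < p)%nat -> (j < q)%nat ->
  M i j = 2 * dot3 (conv (A i)) (conv (B j)).
Proof. intros [HA [HB [_ [_ HM]]]] Hi Hj. rewrite HM by auto.
  apply inner2_conv; apply psd2_sym; auto. Qed.

Lemma indep_use A B c : SF p q M (A, B) ->
  (forall i, (i < p)%nat -> dot3 (conv (A i)) (mv3 (Bmat B j1 j2 j3) c) = 0) -> c = zero3.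
Proof. intros HS H.
  assert (K : forall t, (t < 3)%nat -> cf c t = 0).
  { apply Hind. intros i Hi. simpl.
    rewrite !(Mij_dot A B) by auto.
    specialize (H i Hi). rewrite dot_mv in H. unfold Bmat in H; simpl in H. simpl. lra. }
  apply V3_eq; simpl; [apply (K 0%nat) | apply (K 1%nat) | apply (K 2%nat)]; lia.
Qed.

Lemma detB_nz A B : SF p q M (A, B) -> det3 (Bmat B j1 j2 j3) <> 0.
Proof. intros HS Hd. destruct (ker3 _ Hd) as [c [Hc Hk]]. apply Hc.
  apply (indep_use A B); auto. intros i Hi. rewrite Hk. unfold dot3, zero3; simpl; ring. Qed.

Lemma A_span A B X : SF p q M (A, B) -> (forall i, (i < p)%nat -> dot3 (conv (A i)) X = 0) -> X = zero3.
Proof. intros HS H. rewrite <- (solve3_ok (Bmat B j1 j2 j3) X) by (eapply detB_nz; eauto).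
  rewrite (indep_use A B (solve3 (Bmat B j1 j2 j3) X)); auto.
  - unfold mv3, vadd, vscal, zero3; apply V3_eq; simpl; ring.
  - intros i Hi. rewrite solve3_ok by (eapply detB_nz; eauto). auto.
Qed.

Lemma B_span A B X : SF p q M (A, B) -> (forall j, (j < q)%nat -> dot3 (conv (B j)) X = 0) -> X = zero3.
Proof. intros HS H. apply (mtv3_inj (Bmat B j1 j2 j3)). eapply detB_nz; eauto.
  unfold mtv3, Bmat; simpl. rewrite !H by auto. reflexivity. Qed.

End Span.

Definition vsum (n : nat) (f : nat -> V3) : V3 :=
  v3 (fsum n (fun i => x0 (f i))) (fsum n (fun i => x1 (f i))) (fsum n (fun i => x2 (f i))).

Lemma vsum_mv n C f : vsum n (fun i => mv3 C (f i)) = mv3 C (vsum n f).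
Proof. induction n.
  - apply V3_eq; unfold vsum, mv3, vadd, vscal; simpl; ring.
  - unfold vsum in *; simpl. injection IHn; intros E2 E1 E0.
    apply V3_eq; simpl; [rewrite E0|rewrite E1|rewrite E2]; unfold mv3, vadd, vscal; simpl; ring.
Qed.

Lemma vsum_ext n f g : (forall i, (i < n)%nat -> f i = g i) -> vsum n f = vsum n g.
Proof. intros H; unfold vsum; apply V3_eq; simpl; apply fsum_ext; intros; rewrite H; auto. Qed.

Lemma dot_vsum n a f : dot3 a (vsum n f) = fsum n (fun i => dot3 a (f i)).
Proof. induction n; simpl. - unfold dot3, vsum; simpl; ring. - rewrite <- IHn. unfold dot3, vsum; simpl; ring. Qed.

Lemma inK_vsum n f : (forall i, (i < n)%nat -> inK (f i)) -> inK (vsum n f).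
Proof. induction n; intros H.
  - unfold inK, vsum; simpl; lra.
  - assert (IH : inK (vsum n f)) by (apply IHn; intros; apply H; lia).
    assert (Hn : inK (f n)) by (apply H; lia).
    unfold inK, vsum in *; simpl in *.
    set (a0 := fsum n (fun i => x0 (f i))) in *. set (a1 := fsum n (fun i => x1 (f i))) in *.
    set (a2 := fsum n (fun i => x2 (f i))) in *.
    destruct IH as [I1 I2]; destruct Hn as [N1 N2].
    split; [lra|].
    assert ((a1 * x1 (f n) + a2 * x2 (f n))^2 <= (a1*a1 + a2*a2) * (x1 (f n) * x1 (f n) + x2 (f n) * x2 (f n))).
    { pose proof (pow2_ge_0 (a1 * x2 (f n) - a2 * x1 (f n))). nra. }
    assert ((a1*a1 + a2*a2) * (x1 (f n) * x1 (f n) + x2 (f n) * x2 (f n)) <= (a0 * a0) * (x0 (f n) * x0 (f n))).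
    { apply Rmult_le_compat; nra. }
    assert (a1 * x1 (f n) + a2 * x2 (f n) <= a0 * x0 (f n)).
    { assert (0 <= a0 * x0 (f n)) by nra. nra. }
    nra.
Qed.

Definition cong (g : Mat2) (x : V3) := conv (mul2 (tr2 g) (mul2 (back x) g)).
Definition congM (g : Mat2) := m3 (cong g (v3 1 0 0)) (cong g (v3 0 1 0)) (cong g (v3 0 0 1)).
Lemma cong_lin g x : cong g x = mv3 (congM g) x.
Proof. apply V3_eq; unfold congM, cong, mv3, vadd, vscal, conv, back, mul2, tr2; simpl; field. Qed.

Lemma cong_e0 ra rd b : 0 < ra -> 0 < rd ->
  cong (mk2 (1/ra) (-b/(ra*rd)) 0 (ra/rd))
   (v3 ((ra*ra + (rd*rd + b*b)/(ra*ra))/2) ((ra*ra - (rd*rd + b*b)/(ra*ra))/2) b) = e0.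
Proof. intros. apply V3_eq; unfold cong, conv, back, mul2, tr2, e0; simpl; field; lra. Qed.

Lemma normalize p q M (A B : nat -> Mat2) :
  SF p q M (A, B) ->
  (forall X, (forall i, (i < p)%nat -> dot3 (conv (A i)) X = 0) -> X = zero3) ->
  exists g, GL2 g /\ vsum p (fun i => conv (fst (act g (A, B)) i)) = e0.
Proof.
  intros HS Hsp. pose proof HS as [HA [HB [HA0 [HB0 HM]]]].
  set (s := vsum p (fun i => conv (A i))).
  assert (HK : inK s) by (apply inK_vsum; intros; apply psd2_conv; auto).
  assert (Hai : forall i, (i < p)%nat -> inK (conv (A i))) by (intros; apply psd2_conv; auto).
  assert (Hpd : x1 s * x1 s + x2 s * x2 s < x0 s * x0 s).
  { destruct (Rlt_le_dec (x1 s * x1 s + x2 s * x2 s) (x0 s * x0 s)) as [|Hle]; auto. exfalso.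
    destruct HK as [HK1 HK2].
    set (f := v3 (x0 s) (- x1 s) (- x2 s)).
    assert (Hf : inK f) by (unfold inK, f; cbn [x0 x1 x2]; split; nra).
    assert (E : fsum p (fun i => dot3 f (conv (A i))) = 0).
    { rewrite <- dot_vsum. fold s. unfold f, dot3; cbn [x0 x1 x2]. apply Rle_antisym; nra. }
    assert (Z : forall i, (i < p)%nat -> dot3 f (conv (A i)) = 0).
    { apply fsum_nonneg_zero; auto. intros; apply inK_dot; auto. }
    assert (Hf0 : f = zero3).
    { apply Hsp. intros i Hi. rewrite <- (Z i Hi). unfold dot3; ring. }
    assert (Hs0 : x0 s = 0) by (unfold f in Hf0; injection Hf0; auto).
    assert (E2 : fsum p (fun i => dot3 e0 (conv (A i))) = 0).
    { rewrite <- dot_vsum. fold s. unfold e0, dot3; cbn [x0 x1 x2]. rewrite Hs0. ring. }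
    assert (Z2 : forall i, (i < p)%nat -> dot3 e0 (conv (A i)) = 0).
    { apply fsum_nonneg_zero; auto. intros i Hi. unfold dot3, e0; cbn [x0 x1 x2].
      destruct (Hai i Hi). lra. }
    assert (e0 = zero3) by (apply Hsp; intros i Hi; rewrite <- (Z2 i Hi); unfold dot3; ring).
    unfold e0, zero3 in H; injection H; lra. }
  destruct HK as [HK1 HK2].
  assert (Hs0 : 0 < x0 s) by nra.
  assert (Ha : 0 < x0 s + x1 s) by nra.
  set (d := (x0 s + x1 s) * (x0 s - x1 s) - x2 s * x2 s).
  assert (Hd : 0 < d) by (unfold d; nra).
  set (ra := sqrt (x0 s + x1 s)). set (rd := sqrt d).
  assert (Hra : 0 < ra) by (apply sqrt_lt_R0; auto).
  assert (Hrd : 0 < rd) by (apply sqrt_lt_R0; auto).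
  assert (Era : ra * ra = x0 s + x1 s) by (apply sqrt_sqrt; lra).
  assert (Erd : rd * rd = d) by (apply sqrt_sqrt; lra).
  set (b := x2 s).
  exists (mk2 (1/ra) (-b/(ra*rd)) 0 (ra/rd)). split.
  - unfold GL2, det2; simpl. intro Hz. field_simplify in Hz; [|lra].
    assert (ra * ra / (ra * rd) <> 0). { apply Rmult_integral_contrapositive_currified; [nra|]. apply Rinv_neq_0_compat. nra. }
    unfold Rdiv in *. nra.
  - rewrite (vsum_ext p _ (fun i => mv3 (congM (mk2 (1/ra) (-b/(ra*rd)) 0 (ra/rd))) (conv (A i)))).
    + rewrite vsum_mv. fold s. rewrite <- cong_lin.
      rewrite <- (cong_e0 ra rd b) by auto. f_equal.
      assert (Hx : x0 s - x1 s = (rd * rd + b * b) / (ra * ra)).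
      { rewrite Erd, Era. unfold d, b. field. lra. }
      rewrite <- Hx, Era.
      apply V3_eq; cbn [x0 x1 x2]; [field|field|reflexivity].
    + intros i Hi. simpl. rewrite <- cong_lin. unfold cong. rewrite back_conv; auto.
      apply psd2_sym; auto.
Qed.

Definition vsub (a b : V3) := v3 (x0 a - x0 b) (x1 a - x1 b) (x2 a - x2 b).

Lemma vsum_mtv n C f : vsum n (fun i => mtv3 C (f i)) = mtv3 C (vsum n f).
Proof. induction n.
  - apply V3_eq; unfold vsum, mtv3, dot3; simpl; ring.
  - unfold vsum in *; simpl. injection IHn; intros E2 E1 E0.
    apply V3_eq; simpl; [rewrite E0|rewrite E1|rewrite E2]; unfold mtv3, dot3; simpl; ring.
Qed.

Lemma solve3_lin B y : det3 B <> 0 ->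
  solve3 B y = mv3 (m3 (solve3 B (v3 1 0 0)) (solve3 B (v3 0 1 0)) (solve3 B (v3 0 0 1))) y.
Proof. intros H. unfold det3 in H. apply V3_eq; unfold mv3, solve3, det3, vadd, vscal, cross, dot3 in *; simpl; field; auto. Qed.

Lemma mv3_lin B y : mv3 B y = mv3 (m3 (mv3 B (v3 1 0 0)) (mv3 B (v3 0 1 0)) (mv3 B (v3 0 0 1))) y.
Proof. apply V3_eq; unfold mv3, vadd, vscal; simpl; ring. Qed.

Lemma solve3_col0 B : det3 B <> 0 -> solve3 B (col0 B) = v3 1 0 0.
Proof. intros H; unfold det3 in H; apply V3_eq; unfold solve3, det3, vscal, cross, dot3 in *; simpl; field; auto. Qed.
Lemma solve3_col1 B : det3 B <> 0 -> solve3 B (col1 B) = v3 0 1 0.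
Proof. intros H; unfold det3 in H; apply V3_eq; unfold solve3, det3, vscal, cross, dot3 in *; simpl; field; auto. Qed.
Lemma solve3_col2 B : det3 B <> 0 -> solve3 B (col2 B) = v3 0 0 1.
Proof. intros H; unfold det3 in H; apply V3_eq; unfold solve3, det3, vscal, cross, dot3 in *; simpl; field; auto. Qed.

Section Fcons.
Variables (p q : nat) (M : nat -> nat -> R) (j1 j2 j3 : nat).
Hypothesis Hind : cols_indep p M (j1 :: j2 :: j3 :: nil).
Hypothesis Hj1 : (j1 < q)%nat.
Hypothesis Hj2 : (j2 < q)%nat.
Hypothesis Hj3 : (j3 < q)%nat.

Lemma F_exists A B A' B' : SF p q M (A, B) -> SF p q M (A', B') ->
  vsum p (fun i => conv (A i)) = e0 -> vsum p (fun i => conv (A' i)) = e0 ->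
  exists Fm : M3, x0 (col0 Fm) = 1 /\ x0 (col1 Fm) = 0 /\ x0 (col2 Fm) = 0 /\
    (forall i, (i < p)%nat -> conv (A' i) = mtv3 Fm (conv (A i))) /\
    (forall j, (j < q)%nat -> conv (B j) = mv3 Fm (conv (B' j))).
Proof.
  intros HP HQ SP SQ.
  set (Bm := Bmat B j1 j2 j3). set (Bq := Bmat B' j1 j2 j3).
  assert (dBq : det3 Bq <> 0) by (eapply detB_nz; eauto).
  set (Ft := fun y => mv3 Bm (solve3 Bq y)).
  set (Fm := m3 (Ft (v3 1 0 0)) (Ft (v3 0 1 0)) (Ft (v3 0 0 1))).
  assert (HFt : forall y, mv3 Fm y = Ft y).
  { intros y. unfold Fm, Ft. rewrite (solve3_lin Bq y) by auto.
    set (S0 := solve3 Bq (v3 1 0 0)). set (S1 := solve3 Bq (v3 0 1 0)). set (S2 := solve3 Bq (v3 0 0 1)).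
    apply V3_eq; unfold mv3, vadd, vscal; simpl; ring. }
  assert (Hcol : forall k, (k < 3)%nat -> mv3 Fm (conv (B' (nth k (j1 :: j2 :: j3 :: nil) 0%nat)))
                       = conv (B (nth k (j1 :: j2 :: j3 :: nil) 0%nat))).
  { intros k Hk. rewrite HFt. unfold Ft.
    destruct k as [|[|[|]]]; simpl; [| | |lia].
    - change (conv (B' j1)) with (col0 Bq). rewrite solve3_col0 by auto.
      unfold mv3, vadd, vscal, Bm, Bmat; apply V3_eq; simpl; ring.
    - change (conv (B' j2)) with (col1 Bq). rewrite solve3_col1 by auto.
      unfold mv3, vadd, vscal, Bm, Bmat; apply V3_eq; simpl; ring.
    - change (conv (B' j3)) with (col2 Bq). rewrite solve3_col2 by auto.
      unfold mv3, vadd, vscal, Bm, Bmat; apply V3_eq; simpl; ring. }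
  assert (HA : forall i, (i < p)%nat -> conv (A' i) = mtv3 Fm (conv (A i))).
  { intros i Hi.
    assert (Z : vsub (mtv3 Fm (conv (A i))) (conv (A' i)) = zero3).
    { apply (mtv3_inj Bq); auto.
      assert (Hk : forall k, (k < 3)%nat -> forall jk, jk = nth k (j1 :: j2 :: j3 :: nil) 0%nat ->
         dot3 (conv (B' jk)) (vsub (mtv3 Fm (conv (A i))) (conv (A' i))) = 0).
      { intros k Hk jk Ejk.
        assert (Hjk : (jk < q)%nat) by (subst; destruct k as [|[|[|]]]; simpl; auto; lia).
        assert (E1 : dot3 (conv (B' jk)) (vsub (mtv3 Fm (conv (A i))) (conv (A' i)))
            = dot3 (mtv3 Fm (conv (A i))) (conv (B' jk)) - dot3 (conv (A' i)) (conv (B' jk)))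
          by (unfold dot3, vsub; simpl; ring).
        rewrite E1, adj_mtv. subst jk. rewrite Hcol by auto.
        pose proof (Mij_dot p q M A B i (nth k (j1 :: j2 :: j3 :: nil) 0%nat) HP Hi Hjk).
        pose proof (Mij_dot p q M A' B' i (nth k (j1 :: j2 :: j3 :: nil) 0%nat) HQ Hi Hjk).
        lra. }
      unfold mtv3. unfold Bq, Bmat. cbn [col0 col1 col2].
      rewrite (Hk 0%nat) by (auto; lia). rewrite (Hk 1%nat) by (auto; lia). rewrite (Hk 2%nat) by (auto; lia).
      reflexivity. }
    unfold vsub, zero3 in Z. injection Z; intros. apply V3_eq; simpl; lra. }
  exists Fm.
  assert (HB : forall j, (j < q)%nat -> conv (B j) = mv3 Fm (conv (B' j))).
  { intros j Hj.
    assert (Z : vsub (mv3 Fm (conv (B' j))) (conv (B j)) = zero3).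
    { apply (A_span p q M j1 j2 j3 Hind Hj1 Hj2 Hj3 A B); auto.
      intros i Hi.
      assert (E1 : dot3 (conv (A i)) (vsub (mv3 Fm (conv (B' j))) (conv (B j)))
            = dot3 (conv (A i)) (mv3 Fm (conv (B' j))) - dot3 (conv (A i)) (conv (B j)))
          by (unfold dot3, vsub; simpl; ring).
      rewrite E1, <- adj_mtv, <- HA by auto.
      pose proof (Mij_dot p q M A B i j HP Hi Hj).
      pose proof (Mij_dot p q M A' B' i j HQ Hi Hj).
      lra. }
    unfold vsub, zero3 in Z. injection Z; intros. apply V3_eq; simpl; lra. }
  assert (He : mtv3 Fm e0 = e0).
  { rewrite <- SP at 1. rewrite <- vsum_mtv. rewrite <- SQ. apply vsum_ext. intros; symmetry; auto. }
  clearbody Fm. destruct Fm as [c0 c1 c2].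
  unfold mtv3, e0, dot3 in He. cbn [col0 col1 col2] in *. injection He; intros E2 E1 E0.
  split; [lra|]. split; [lra|]. split; [lra|]. split; auto.
Qed.
End Fcons.
Lemma sqrt2_abs a b c s t : 0 < a -> 0 < c -> 0 < s -> s * s = a * c - b * b -> 0 < t -> t * t = a + c + 2 * s ->
  ((a + s)/t) * ((a + s)/t) + (b/t) * (b/t) = a /\
  (b/t) * ((a+s)/t + (c+s)/t) = b /\
  (b/t) * (b/t) + ((c+s)/t) * ((c+s)/t) = c /\
  ((a+s)/t) * ((c+s)/t) - (b/t) * (b/t) = s.
Proof. intros Ha Hc Hs Es Ht Et.
  repeat split.
  - replace (((a + s)/t) * ((a + s)/t) + (b/t) * (b/t)) with (((a+s)*(a+s) + b*b)/(t*t)) by (field; lra).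
    replace ((a+s)*(a+s) + b*b) with (a * (t*t)) by (rewrite Et; nra). field; lra.
  - replace ((b/t) * ((a+s)/t + (c+s)/t)) with ((b * (a + c + 2 * s))/(t*t)) by (field; lra).
    rewrite <- Et. field; lra.
  - replace ((b/t) * (b/t) + ((c+s)/t) * ((c+s)/t)) with (((c+s)*(c+s) + b*b)/(t*t)) by (field; lra).
    replace ((c+s)*(c+s) + b*b) with (c * (t*t)) by (rewrite Et; nra). field; lra.
  - replace (((a+s)/t) * ((c+s)/t) - (b/t) * (b/t)) with (((a+s)*(c+s) - b*b)/(t*t)) by (field; lra).
    replace ((a+s)*(c+s) - b*b) with (s * (t*t)) by (rewrite Et; nra). field; lra.
Qed.

Lemma Rmult_le_0_l_compat_l_helper a b : 0 <= a -> b <= 0 -> a * b <= 0.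
Proof. intros; nra. Qed.

Section Path.
Variables (a1 a2 n11 n12 n21 n22 : R).

Definition s11 t := (1 - t) + t * (n11 * n11 + n21 * n21) - t * (1 - t) * (a1 * a1).
Definition s12 t := t * (n11 * n12 + n21 * n22) - t * (1 - t) * (a1 * a2).
Definition s22 t := (1 - t) + t * (n12 * n12 + n22 * n22) - t * (1 - t) * (a2 * a2).
Definition dS t := s11 t * s22 t - s12 t * s12 t.
Definition sig t := sqrt (dS t).
Definition tau t := sqrt (s11 t + s22 t + 2 * sig t).
Definition r11 t := (s11 t + sig t) / tau t.
Definition r12 t := s12 t / tau t.
Definition r22 t := (s22 t + sig t) / tau t.
Definition i11 t := (s22 t + sig t) / (tau t * sig t).
Definition i12 t := - s12 t / (tau t * sig t).
Definition i22 t := (s11 t + sig t) / (tau t * sig t).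

Definition PhiA t (a : V3) :=
  v3 (x0 a + t * (a1 * x1 a + a2 * x2 a)) (r11 t * x1 a + r12 t * x2 a) (r12 t * x1 a + r22 t * x2 a).
Definition cc1 t (b : V3) := x1 b - x0 b * t * a1.
Definition cc2 t (b : V3) := x2 b - x0 b * t * a2.
Definition PsiB t (b : V3) :=
  v3 (x0 b) (i11 t * cc1 t b + i12 t * cc2 t b) (i12 t * cc1 t b + i22 t * cc2 t b).
Definition Fa (a : V3) := v3 (x0 a + a1 * x1 a + a2 * x2 a) (n11 * x1 a + n12 * x2 a) (n21 * x1 a + n22 * x2 a).
Definition FTb (b : V3) :=
  v3 (x0 b) (a1 * x0 b + n11 * x1 b + n21 * x2 b) (a2 * x0 b + n12 * x1 b + n22 * x2 b).

Definition qS t y1 y2 := s11 t * y1 * y1 + 2 * s12 t * y1 * y2 + s22 t * y2 * y2.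

Definition posS t := 0 < s11 t /\ 0 < s22 t /\ 0 < dS t.

Lemma R_facts t : posS t ->
  0 < sig t /\ 0 < tau t /\
  r11 t * r11 t + r12 t * r12 t = s11 t /\
  r12 t * (r11 t + r22 t) = s12 t /\
  r12 t * r12 t + r22 t * r22 t = s22 t /\
  r11 t * r22 t - r12 t * r12 t = sig t /\
  i11 t = r22 t / sig t /\ i12 t = - r12 t / sig t /\ i22 t = r11 t / sig t.
Proof. intros [H1 [H2 H3]].
  assert (Hs : 0 < sig t) by (apply sqrt_lt_R0; auto).
  assert (Es : sig t * sig t = s11 t * s22 t - s12 t * s12 t) by (apply sqrt_sqrt; unfold dS in H3; lra).
  assert (Ht : 0 < tau t) by (apply sqrt_lt_R0; lra).
  assert (Et : tau t * tau t = s11 t + s22 t + 2 * sig t) by (apply sqrt_sqrt; lra).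
  destruct (sqrt2_abs (s11 t) (s12 t) (s22 t) (sig t) (tau t)) as [E1 [E2 [E3 E4]]]; auto.
  unfold r11, r12, r22, i11, i12, i22.
  repeat split; auto; field; lra.
Qed.

Lemma qS_R t y1 y2 : posS t ->
  qS t y1 y2 = (r11 t * y1 + r12 t * y2) * (r11 t * y1 + r12 t * y2) + (r12 t * y1 + r22 t * y2) * (r12 t * y1 + r22 t * y2).
Proof. intros H. destruct (R_facts t H) as [_ [_ [E1 [E2 [E3 _]]]]].
  unfold qS. rewrite <- E1, <- E2, <- E3. ring. Qed.

Lemma A_valid t a : 0 <= t <= 1 -> posS t -> inK a -> inK (Fa a) -> inK (PhiA t a).
Proof. intros Ht HS [Ha1 Ha2] [Hb1 Hb2]. unfold Fa, PhiA, inK in *; cbn [x0 x1 x2] in *.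
  set (u := x0 a) in *. set (y1 := x1 a) in *. set (y2 := x2 a) in *.
  split. { nra. }
  rewrite <- (qS_R t y1 y2 HS).
  assert (E : (u + t * (a1 * y1 + a2 * y2)) * (u + t * (a1 * y1 + a2 * y2)) - qS t y1 y2 =
     (1 - t) * (u * u - (y1 * y1 + y2 * y2)) +
     t * ((u + a1 * y1 + a2 * y2) * (u + a1 * y1 + a2 * y2) -
          ((n11 * y1 + n12 * y2) * (n11 * y1 + n12 * y2) + (n21 * y1 + n22 * y2) * (n21 * y1 + n22 * y2)))).
  { unfold qS, s11, s12, s22. ring. }
  assert (0 <= (1 - t) * (u * u - (y1 * y1 + y2 * y2))) by (apply Rmult_le_pos; lra).
  assert (0 <= t * ((u + a1 * y1 + a2 * y2) * (u + a1 * y1 + a2 * y2) -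
          ((n11 * y1 + n12 * y2) * (n11 * y1 + n12 * y2) + (n21 * y1 + n22 * y2) * (n21 * y1 + n22 * y2))))
    by (apply Rmult_le_pos; lra).
  lra.
Qed.

Lemma CS2 z1 z2 y1 y2 : (z1 * y1 + z2 * y2) * (z1 * y1 + z2 * y2) <= (z1 * z1 + z2 * z2) * (y1 * y1 + y2 * y2).
Proof. pose proof (pow2_ge_0 (z1 * y2 - z2 * y1)). nra. Qed.

Lemma CSK b0 z1 z2 y1 y2 : z1 * z1 + z2 * z2 <= b0 * b0 ->
  (z1 * y1 + z2 * y2) * (z1 * y1 + z2 * y2) <= b0 * b0 * (y1 * y1 + y2 * y2).
Proof. intros H. pose proof (CS2 z1 z2 y1 y2).
  assert ((z1 * z1 + z2 * z2) * (y1 * y1 + y2 * y2) <= b0 * b0 * (y1 * y1 + y2 * y2)).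
  { apply Rmult_le_compat_r; nra. }
  lra. Qed.

Lemma G_le t b b' : 0 <= t <= 1 -> inK b -> inK b' -> b = FTb b' -> forall y1 y2,
  (cc1 t b * y1 + cc2 t b * y2) * (cc1 t b * y1 + cc2 t b * y2) <= x0 b * x0 b * qS t y1 y2.
Proof. intros Ht [Hb1 Hb2] [Hc1 Hc2] Eb y1 y2.
  assert (E : (cc1 t b * y1 + cc2 t b * y2) * (cc1 t b * y1 + cc2 t b * y2) - x0 b * x0 b * qS t y1 y2 =
    (1 - t) * ((x1 b * y1 + x2 b * y2) * (x1 b * y1 + x2 b * y2) - x0 b * x0 b * (y1 * y1 + y2 * y2)) +
    t * (((x1 b - x0 b * a1) * y1 + (x2 b - x0 b * a2) * y2) * ((x1 b - x0 b * a1) * y1 + (x2 b - x0 b * a2) * y2)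
         - x0 b * x0 b * ((n11 * y1 + n12 * y2) * (n11 * y1 + n12 * y2) + (n21 * y1 + n22 * y2) * (n21 * y1 + n22 * y2)))).
  { unfold cc1, cc2, qS, s11, s12, s22. ring. }
  assert (T1 : (x1 b * y1 + x2 b * y2) * (x1 b * y1 + x2 b * y2) - x0 b * x0 b * (y1 * y1 + y2 * y2) <= 0).
  { pose proof (CSK (x0 b) (x1 b) (x2 b) y1 y2). lra. }
  assert (T2 : ((x1 b - x0 b * a1) * y1 + (x2 b - x0 b * a2) * y2) * ((x1 b - x0 b * a1) * y1 + (x2 b - x0 b * a2) * y2)
         - x0 b * x0 b * ((n11 * y1 + n12 * y2) * (n11 * y1 + n12 * y2) + (n21 * y1 + n22 * y2) * (n21 * y1 + n22 * y2)) <= 0).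
  { rewrite Eb. unfold FTb; cbn [x0 x1 x2].
    replace ((a1 * x0 b' + n11 * x1 b' + n21 * x2 b' - x0 b' * a1) * y1 +
             (a2 * x0 b' + n12 * x1 b' + n22 * x2 b' - x0 b' * a2) * y2)
      with (x1 b' * (n11 * y1 + n12 * y2) + x2 b' * (n21 * y1 + n22 * y2)) by ring.
    pose proof (CSK (x0 b') (x1 b') (x2 b') (n11 * y1 + n12 * y2) (n21 * y1 + n22 * y2) Hc2).
    lra. }
  assert (0 <= (1 - t) * - ((x1 b * y1 + x2 b * y2) * (x1 b * y1 + x2 b * y2) - x0 b * x0 b * (y1 * y1 + y2 * y2))) by (apply Rmult_le_pos; lra).
  assert (0 <= t * - (((x1 b - x0 b * a1) * y1 + (x2 b - x0 b * a2) * y2) * ((x1 b - x0 b * a1) * y1 + (x2 b - x0 b * a2) * y2)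
         - x0 b * x0 b * ((n11 * y1 + n12 * y2) * (n11 * y1 + n12 * y2) + (n21 * y1 + n22 * y2) * (n21 * y1 + n22 * y2)))) by (apply Rmult_le_pos; lra).
  lra.
Qed.

End Path.

Lemma B_fin r11' r12' r22' b0 c1 c2 : r11' * r22' - r12' * r12' <> 0 -> 0 <= b0 ->
  (forall y1 y2, (c1 * y1 + c2 * y2) * (c1 * y1 + c2 * y2) <=
      b0 * b0 * ((r11' * y1 + r12' * y2) * (r11' * y1 + r12' * y2) + (r12' * y1 + r22' * y2) * (r12' * y1 + r22' * y2))) ->
  let d := r11' * r22' - r12' * r12' in
  let w1 := (r22' * c1 - r12' * c2) / d in
  let w2 := (- r12' * c1 + r11' * c2) / d in
  w1 * w1 + w2 * w2 <= b0 * b0.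
Proof. intros Hd Hb H d w1 w2.
  set (y1 := (r22' * w1 - r12' * w2) / d). set (y2 := (- r12' * w1 + r11' * w2) / d).
  specialize (H y1 y2).
  assert (E1 : c1 * y1 + c2 * y2 = w1 * w1 + w2 * w2) by (unfold y1, y2, w1, w2, d; field; auto).
  assert (E2 : r11' * y1 + r12' * y2 = w1) by (unfold y1, y2, w1, w2, d; field; auto).
  assert (E3 : r12' * y1 + r22' * y2 = w2) by (unfold y1, y2, w1, w2, d; field; auto).
  rewrite E1, E2, E3 in H.
  set (W := w1 * w1 + w2 * w2) in *.
  assert (0 <= W) by (unfold W; nra).
  destruct (Req_dec W 0). nra.
  assert (W * W <= (b0 * b0) * W) by nra.
  apply (Rmult_le_reg_r W); lra.
Qed.

Section Path2.
Variables (a1 a2 n11 n12 n21 n22 : R).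

Lemma B_valid t b b' : 0 <= t <= 1 -> posS a1 a2 n11 n12 n21 n22 t -> inK b -> inK b' ->
  b = FTb a1 a2 n11 n12 n21 n22 b' -> inK (PsiB a1 a2 n11 n12 n21 n22 t b).
Proof. intros Ht HS Hb Hb' Eb.
  destruct (R_facts a1 a2 n11 n12 n21 n22 t HS) as [Hs [Ht' [_ [_ [_ [Hsig [I1 [I2 I3]]]]]]]].
  pose proof (G_le a1 a2 n11 n12 n21 n22 t b b' Ht Hb Hb' Eb) as G.
  assert (Hd : r11 a1 a2 n11 n12 n21 n22 t * r22 a1 a2 n11 n12 n21 n22 t - r12 a1 a2 n11 n12 n21 n22 t * r12 a1 a2 n11 n12 n21 n22 t <> 0) by lra.
  pose proof (B_fin _ _ _ (x0 b) (cc1 a1 t b) (cc2 a2 t b) Hd (proj1 Hb)) as BF.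
  cbv zeta in BF.
  unfold inK, PsiB; cbn [x0 x1 x2]. split; [apply Hb|].
  rewrite I1, I2, I3. rewrite <- Hsig.
  match goal with |- ?L <= _ => replace L with
    (((r22 a1 a2 n11 n12 n21 n22 t * cc1 a1 t b - r12 a1 a2 n11 n12 n21 n22 t * cc2 a2 t b) /
        (r11 a1 a2 n11 n12 n21 n22 t * r22 a1 a2 n11 n12 n21 n22 t - r12 a1 a2 n11 n12 n21 n22 t * r12 a1 a2 n11 n12 n21 n22 t)) *
     ((r22 a1 a2 n11 n12 n21 n22 t * cc1 a1 t b - r12 a1 a2 n11 n12 n21 n22 t * cc2 a2 t b) /
        (r11 a1 a2 n11 n12 n21 n22 t * r22 a1 a2 n11 n12 n21 n22 t - r12 a1 a2 n11 n12 n21 n22 t * r12 a1 a2 n11 n12 n21 n22 t)) +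
     ((- r12 a1 a2 n11 n12 n21 n22 t * cc1 a1 t b + r11 a1 a2 n11 n12 n21 n22 t * cc2 a2 t b) /
        (r11 a1 a2 n11 n12 n21 n22 t * r22 a1 a2 n11 n12 n21 n22 t - r12 a1 a2 n11 n12 n21 n22 t * r12 a1 a2 n11 n12 n21 n22 t)) *
     ((- r12 a1 a2 n11 n12 n21 n22 t * cc1 a1 t b + r11 a1 a2 n11 n12 n21 n22 t * cc2 a2 t b) /
        (r11 a1 a2 n11 n12 n21 n22 t * r22 a1 a2 n11 n12 n21 n22 t - r12 a1 a2 n11 n12 n21 n22 t * r12 a1 a2 n11 n12 n21 n22 t)))
    by (field; auto) end.
  apply BF. intros y1 y2. rewrite <- qS_R by auto. apply G.
Qed.

Lemma dot_pres t a b : posS a1 a2 n11 n12 n21 n22 t ->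
  dot3 (PhiA a1 a2 n11 n12 n21 n22 t a) (PsiB a1 a2 n11 n12 n21 n22 t b) = dot3 a b.
Proof. intros HS.
  destruct (R_facts a1 a2 n11 n12 n21 n22 t HS) as [Hs [Ht' [_ [_ [_ [Hsig [I1 [I2 I3]]]]]]]].
  unfold dot3, PhiA, PsiB, cc1, cc2; cbn [x0 x1 x2].
  rewrite I1, I2, I3. rewrite <- Hsig. rewrite <- Hsig in Hs. field. lra.
Qed.

Lemma posS_of t : (forall y1 y2, ~ (y1 = 0 /\ y2 = 0) -> 0 < qS a1 a2 n11 n12 n21 n22 t y1 y2) ->
  posS a1 a2 n11 n12 n21 n22 t.
Proof. intros H. unfold posS, qS, dS in *.
  pose proof (H 1 0) as H1. pose proof (H 0 1) as H2.
  assert (A1 : 0 < s11 a1 n11 n21 t) by (assert (~ (1 = 0 /\ 0 = 0)) by lra; specialize (H1 H0); nra).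
  assert (A2 : 0 < s22 a2 n12 n22 t) by (assert (~ (0 = 0 /\ 1 = 0)) by lra; specialize (H2 H0); nra).
  split; auto. split; auto.
  assert (~ (s12 a1 a2 n11 n12 n21 n22 t = 0 /\ - s11 a1 n11 n21 t = 0)) by lra.
  specialize (H _ _ H0).
  assert (E : s11 a1 n11 n21 t * s12 a1 a2 n11 n12 n21 n22 t * s12 a1 a2 n11 n12 n21 n22 t +
     2 * s12 a1 a2 n11 n12 n21 n22 t * s12 a1 a2 n11 n12 n21 n22 t * - s11 a1 n11 n21 t +
     s22 a2 n12 n22 t * - s11 a1 n11 n21 t * - s11 a1 n11 n21 t =
     s11 a1 n11 n21 t * (s11 a1 n11 n21 t * s22 a2 n12 n22 t - s12 a1 a2 n11 n12 n21 n22 t * s12 a1 a2 n11 n12 n21 n22 t)) by ring.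
  rewrite E in H.
  apply (Rmult_lt_reg_l (s11 a1 n11 n21 t)); lra.
Qed.

Lemma qS_pos q (bs bs' : nat -> V3) t :
  (forall j, (j < q)%nat -> inK (bs j) /\ inK (bs' j) /\ bs j = FTb a1 a2 n11 n12 n21 n22 (bs' j)) ->
  (forall X, (forall j, (j < q)%nat -> dot3 (bs j) X = 0) -> X = zero3) ->
  0 <= t <= 1 ->
  forall y1 y2, ~ (y1 = 0 /\ y2 = 0) -> 0 < qS a1 a2 n11 n12 n21 n22 t y1 y2.
Proof. intros Hb Hsp Ht y1 y2 Hy.
  destruct (Rlt_le_dec 0 (qS a1 a2 n11 n12 n21 n22 t y1 y2)) as [|Hle]; auto. exfalso.
  assert (Z : v3 (- (t * (a1 * y1 + a2 * y2))) y1 y2 = zero3).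
  { apply Hsp. intros j Hj. destruct (Hb j Hj) as [K1 [K2 E]].
    pose proof (G_le a1 a2 n11 n12 n21 n22 t (bs j) (bs' j) Ht K1 K2 E y1 y2) as G.
    assert (0 <= x0 (bs j) * x0 (bs j)) by nra.
    assert (x0 (bs j) * x0 (bs j) * qS a1 a2 n11 n12 n21 n22 t y1 y2 <= 0).
    { apply Rmult_le_0_l_compat_l_helper; auto. }
    assert (cc1 a1 t (bs j) * y1 + cc2 a2 t (bs j) * y2 = 0) by nra.
    unfold dot3, cc1, cc2 in *; cbn [x0 x1 x2]. nra. }
  injection Z; intros. apply Hy; split; auto.
Qed.

End Path2.

Definition id2 := mk2 1 0 0 1.
Lemma mul2_assoc X Y Z : mul2 X (mul2 Y Z) = mul2 (mul2 X Y) Z.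
Proof. apply Mat2_eq; unfold mul2; simpl; ring. Qed.
Lemma mul2_id_l X : mul2 id2 X = X.
Proof. apply Mat2_eq; unfold mul2, id2; simpl; ring. Qed.
Lemma mul2_id_r X : mul2 X id2 = X.
Proof. apply Mat2_eq; unfold mul2, id2; simpl; ring. Qed.
Lemma mul2_inv_l X : det2 X <> 0 -> mul2 (inv2 X) X = id2.
Proof. unfold det2; intros; apply Mat2_eq; unfold mul2, inv2, id2, det2; simpl; field; auto. Qed.
Lemma mul2_inv_r X : det2 X <> 0 -> mul2 X (inv2 X) = id2.
Proof. unfold det2; intros; apply Mat2_eq; unfold mul2, inv2, id2, det2; simpl; field; auto. Qed.
Lemma tr2_mul X Y : tr2 (mul2 X Y) = mul2 (tr2 Y) (tr2 X).
Proof. apply Mat2_eq; unfold mul2, tr2; simpl; ring. Qed.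
Lemma tr2_inv X : tr2 (inv2 X) = inv2 (tr2 X).
Proof. apply Mat2_eq; unfold tr2, inv2, det2; simpl; try ring; unfold Rdiv; f_equal; f_equal; ring. Qed.
Lemma det2_tr X : det2 (tr2 X) = det2 X.
Proof. unfold det2, tr2; simpl; ring. Qed.

Lemma orth_cases o11 o12 o21 o22 :
  o11 * o11 + o21 * o21 = 1 -> o12 * o12 + o22 * o22 = 1 -> o11 * o12 + o21 * o22 = 0 ->
  o11 * o11 + o12 * o12 = 1 /\ ((o21 = - o12 /\ o22 = o11) \/ (o21 = o12 /\ o22 = - o11)).
Proof. intros H1 H2 H3.
  set (k := o11 * o22 - o12 * o21).
  assert (Ek : k * k = 1).
  { unfold k. transitivity ((o11 * o11 + o21 * o21) * (o12 * o12 + o22 * o22) - (o11 * o12 + o21 * o22) * (o11 * o12 + o21 * o22)); [ring|].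
    rewrite H1, H2, H3; ring. }
  assert (E1 : k * o11 = o22).
  { unfold k. transitivity (o11 * o11 * o22 - o11 * o12 * o21); [ring|].
    replace (o11 * o12) with (- (o21 * o22)) by lra.
    transitivity (o22 * (o11 * o11 + o21 * o21)); [ring|]. rewrite H1; ring. }
  assert (E2 : k * o21 = - o12).
  { unfold k. transitivity (o21 * o22 * o11 - o12 * o21 * o21); [ring|].
    replace (o21 * o22) with (- (o11 * o12)) by lra.
    transitivity (- o12 * (o11 * o11 + o21 * o21)); [ring|]. rewrite H1; ring. }
  assert (Hk : k = 1 \/ k = -1) by (destruct (Rle_lt_dec 0 k); [left|right]; nra).
  destruct Hk as [Hk|Hk]; rewrite Hk in *.
  - split; [|left; split; lra]. replace o12 with (- o21) by lra. lra.
  - split; [|right; split; lra]. replace o12 with o21 by lra. lra.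
Qed.

Lemma half_angle C E : C * C + E * E = 1 -> exists c s, c * c + s * s = 1 /\ c * c - s * s = C /\ 2 * c * s = E.
Proof. intros H.
  destruct (Req_dec C (-1)).
  - exists 0, 1. subst. assert (E * E = 0) by lra. assert (E = 0) by nra. subst. repeat split; lra.
  - assert (HC : -1 < C) by (assert (C * C <= 1) by nra; destruct (Rle_lt_dec C (-1)); [nra|lra]).
    set (c := sqrt ((1 + C) / 2)).
    assert (Hc : 0 < c) by (apply sqrt_lt_R0; lra).
    assert (Ec : c * c = (1 + C) / 2) by (apply sqrt_sqrt; lra).
    exists c, (E / (2 * c)).
    assert (Es : (E / (2 * c)) * (E / (2 * c)) = (1 - C) / 2).
    { replace ((E / (2 * c)) * (E / (2 * c))) with ((E * E) / (4 * (c * c))) by (field; lra).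
      rewrite Ec. replace (E * E) with (1 - C * C) by lra. field. lra. }
    repeat split; try lra. field. lra.
Qed.

Definition rotg c s := mk2 c (- s) s c.
Definition refg c s := mk2 c s s (- c).

Lemma rot_act c s x : c * c + s * s = 1 ->
  mul2 (tr2 (rotg c s)) (mul2 (back x) (rotg c s)) =
  back (v3 (x0 x) ((c * c - s * s) * x1 x + 2 * c * s * x2 x) (- (2 * c * s) * x1 x + (c * c - s * s) * x2 x)).
Proof. intros H. apply Mat2_eq; unfold mul2, tr2, rotg, back; cbn [x0 x1 x2 e11 e12 e21 e22];
  try (transitivity (x0 x * (c * c + s * s) + x1 x * (c*c - s*s) + 2 * c * s * x2 x); [ring|]);
  try (transitivity (x0 x * (c * c + s * s) - ((c * c - s * s) * x1 x + 2 * c * s * x2 x)); [ring|]);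
  try rewrite H; ring. Qed.

Lemma ref_act c s x : c * c + s * s = 1 ->
  mul2 (tr2 (refg c s)) (mul2 (back x) (refg c s)) =
  back (v3 (x0 x) ((c * c - s * s) * x1 x + 2 * c * s * x2 x) ((2 * c * s) * x1 x - (c * c - s * s) * x2 x)).
Proof. intros H. apply Mat2_eq; unfold mul2, tr2, refg, back; cbn [x0 x1 x2 e11 e12 e21 e22];
  try (transitivity (x0 x * (c * c + s * s) + x1 x * (c*c - s*s) + 2 * c * s * x2 x); [ring|]);
  try (transitivity (x0 x * (c * c + s * s) - ((c * c - s * s) * x1 x + 2 * c * s * x2 x)); [ring|]);
  try rewrite H; ring. Qed.

Lemma inv_rotg c s : c * c + s * s = 1 -> inv2 (rotg c s) = tr2 (rotg c s).
Proof. intros H. assert (D : det2 (rotg c s) = 1) by (unfold det2, rotg; simpl; lra).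
  apply Mat2_eq; unfold inv2; rewrite D; unfold rotg, tr2; simpl; field. Qed.
Lemma inv_refg c s : c * c + s * s = 1 -> inv2 (refg c s) = tr2 (refg c s).
Proof. intros H. assert (D : det2 (refg c s) = -1) by (unfold det2, refg; simpl; lra).
  apply Mat2_eq; unfold inv2; rewrite D; unfold refg, tr2; simpl; field. Qed.

Lemma orth_act o11 o12 o21 o22 :
  o11 * o11 + o21 * o21 = 1 -> o12 * o12 + o22 * o22 = 1 -> o11 * o12 + o21 * o22 = 0 ->
  exists g, GL2 g /\ inv2 g = tr2 g /\ forall x,
    mul2 (tr2 g) (mul2 (back x) g) = back (v3 (x0 x) (o11 * x1 x + o12 * x2 x) (o21 * x1 x + o22 * x2 x)).
Proof. intros H1 H2 H3. destruct (orth_cases _ _ _ _ H1 H2 H3) as [Hn [[E1 E2]|[E1 E2]]];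
  destruct (half_angle o11 o12 Hn) as [c [s [Hcs [HC HE]]]].
  - exists (rotg c s). split; [unfold GL2, det2, rotg; simpl; lra|]. split; [apply inv_rotg; auto|].
    intros x. rewrite rot_act by auto. f_equal. apply V3_eq; cbn [x0 x1 x2]; rewrite ?E1, ?E2, <- ?HC, <- ?HE; ring.
  - exists (refg c s). split; [unfold GL2, det2, refg; simpl; lra|]. split; [apply inv_refg; auto|].
    intros x. rewrite ref_act by auto. f_equal. apply V3_eq; cbn [x0 x1 x2]; rewrite ?E1, ?E2, <- ?HC, <- ?HE; ring.
Qed.

Section End1.
Variables (a1 a2 n11 n12 n21 n22 : R).

Lemma end1 : posS a1 a2 n11 n12 n21 n22 1 ->
  exists g, GL2 g /\
   (forall x, mul2 (tr2 g) (mul2 (back (Fa a1 a2 n11 n12 n21 n22 x)) g) = back (PhiA a1 a2 n11 n12 n21 n22 1 x)) /\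
   (forall b', mul2 (inv2 g) (mul2 (back b') (tr2 (inv2 g))) = back (PsiB a1 a2 n11 n12 n21 n22 1 (FTb a1 a2 n11 n12 n21 n22 b'))).
Proof.
  intros HS.
  destruct (R_facts a1 a2 n11 n12 n21 n22 1 HS) as [Hs [Ht [E1 [E2 [E3 [Hsig [I1 [I2 I3]]]]]]]].
  set (r11' := r11 a1 a2 n11 n12 n21 n22 1) in *.
  set (r12' := r12 a1 a2 n11 n12 n21 n22 1) in *.
  set (r22' := r22 a1 a2 n11 n12 n21 n22 1) in *.
  assert (S1 : s11 a1 n11 n21 1 = n11 * n11 + n21 * n21) by (unfold s11; ring).
  assert (S2 : s12 a1 a2 n11 n12 n21 n22 1 = n11 * n12 + n21 * n22) by (unfold s12; ring).
  assert (S3 : s22 a2 n12 n22 1 = n12 * n12 + n22 * n22) by (unfold s22; ring).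
  rewrite S1 in E1. rewrite S2 in E2. rewrite S3 in E3.
  set (Rm := mk2 r11' r12' r12' r22'). set (Nm := mk2 n11 n12 n21 n22).
  assert (dN : det2 Nm <> 0).
  { destruct HS as [_ [_ HdS]]. unfold dS in HdS. rewrite S1, S2, S3 in HdS.
    unfold det2, Nm; simpl. intro Z.
    assert ((n11 * n11 + n21 * n21) * (n12 * n12 + n22 * n22) - (n11 * n12 + n21 * n22) * (n11 * n12 + n21 * n22)
      = (n11 * n22 - n12 * n21) * (n11 * n22 - n12 * n21)) by ring.
    rewrite Z in H. lra. }
  assert (dR : det2 Rm = sig a1 a2 n11 n12 n21 n22 1) by (unfold det2, Rm; simpl; lra).
  assert (dR' : det2 Rm <> 0) by lra.
  assert (RR : mul2 Rm Rm = mul2 (tr2 Nm) Nm).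
  { apply Mat2_eq; unfold mul2, tr2, Rm, Nm; cbn [e11 e12 e21 e22]; lra. }
  assert (RT : tr2 Rm = Rm) by (apply Mat2_eq; reflexivity).
  set (Om := mul2 Rm (inv2 Nm)).
  assert (Orth : mul2 (tr2 Om) Om = id2).
  { unfold Om. rewrite tr2_mul, tr2_inv, RT.
    rewrite <- mul2_assoc. rewrite (mul2_assoc Rm Rm), RR.
    rewrite <- (mul2_assoc (tr2 Nm)). rewrite (mul2_assoc (inv2 (tr2 Nm))).
    rewrite mul2_inv_l by (rewrite det2_tr; auto). rewrite mul2_id_l. apply mul2_inv_r; auto. }
  assert (ON : mul2 Om Nm = Rm).
  { unfold Om. rewrite <- mul2_assoc, mul2_inv_l by auto. apply mul2_id_r. }
  assert (RinvN : mul2 (inv2 Rm) (tr2 Nm) = Om).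
  { rewrite <- (mul2_id_r (tr2 Nm)). rewrite <- (mul2_inv_r Nm) by auto.
    rewrite (mul2_assoc (tr2 Nm)), <- RR. rewrite !mul2_assoc. rewrite mul2_inv_l by auto.
    rewrite mul2_id_l. reflexivity. }
  clearbody Om. destruct Om as [o11 o12 o21 o22].
  assert (O1 : o11 * o11 + o21 * o21 = 1) by
    (assert (H := f_equal e11 Orth); unfold mul2, tr2, id2 in H; cbn [e11 e12 e21 e22] in *; lra).
  assert (O2 : o12 * o12 + o22 * o22 = 1) by
    (assert (H := f_equal e22 Orth); unfold mul2, tr2, id2 in H; cbn [e11 e12 e21 e22] in *; lra).
  assert (O3 : o11 * o12 + o21 * o22 = 0) by
    (assert (H := f_equal e12 Orth); unfold mul2, tr2, id2 in H; cbn [e11 e12 e21 e22] in *; lra).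
  destruct (orth_act _ _ _ _ O1 O2 O3) as [g [Hg [Hinv Hact]]].
  exists g. split; auto. split.
  - intros x. rewrite Hact. f_equal.
    pose proof (f_equal e11 ON) as N1. pose proof (f_equal e12 ON) as N2.
    pose proof (f_equal e21 ON) as N3. pose proof (f_equal e22 ON) as N4.
    unfold mul2, Rm, Nm in N1, N2, N3, N4; cbn [e11 e12 e21 e22] in N1, N2, N3, N4.
    unfold Fa, PhiA; apply V3_eq; cbn [x0 x1 x2]; fold r11' r12' r22'.
    + ring.
    + rewrite <- N1, <- N2. ring.
    + rewrite <- N3, <- N4. ring.
  - intros b'. rewrite Hinv, tr2_tr2. rewrite Hact. f_equal.
    pose proof (f_equal e11 RinvN) as N1. pose proof (f_equal e12 RinvN) as N2.
    pose proof (f_equal e21 RinvN) as N3. pose proof (f_equal e22 RinvN) as N4.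
    unfold mul2, inv2, tr2, Nm in N1, N2, N3, N4; cbn [e11 e12 e21 e22] in N1, N2, N3, N4.
    rewrite dR in N1, N2, N3, N4. unfold Rm in N1, N2, N3, N4; cbn [e11 e12 e21 e22] in N1, N2, N3, N4.
    unfold PsiB, FTb, cc1, cc2; apply V3_eq; cbn [x0 x1 x2].
    + ring.
    + rewrite I1, I2. fold r11' r12' r22'. rewrite <- N1, <- N2. field. lra.
    + rewrite I2, I3. fold r11' r12' r22'. rewrite <- N3, <- N4. field. lra.
Qed.
End End1.

Lemma cont_sqrt f x : continuity_pt f x -> 0 <= f x -> continuity_pt (fun t => sqrt (f t)) x.
Proof. intros Hf Hx. apply (continuity_pt_comp f sqrt x Hf). apply continuity_pt_sqrt; auto. Qed.
Lemma cont_div f g x : continuity_pt f x -> continuity_pt g x -> g x <> 0 -> continuity_pt (fun t => f t / g t) x.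
Proof. intros. apply (continuity_pt_div f g x); auto. Qed.
Lemma cont_abs f x : continuity_pt f x -> continuity_pt (fun t => Rabs (f t)) x.
Proof. intros Hf. apply (continuity_pt_comp f Rabs x Hf). apply Rcontinuity_abs. Qed.
Lemma cont_const c x : continuity_pt (fun _ => c) x.
Proof. apply continuity_pt_const. intros ? ?; reflexivity. Qed.
Lemma cont_id x : continuity_pt (fun t => t) x.
Proof. apply derivable_continuous_pt. apply derivable_pt_id. Qed.

Ltac cont := repeat first [ eassumption | apply cont_const | apply cont_id
  | apply continuity_pt_plus | apply continuity_pt_minus | apply continuity_pt_mult
  | apply continuity_pt_opp | apply cont_abs ].

Lemma cont_fsum n (f : R -> nat -> R) x : (forall k, (k < n)%nat -> continuity_pt (fun s => f s k) x) ->
  continuity_pt (fun s => fsum n (f s)) x.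
Proof. induction n; intros H; simpl. apply cont_const.
  apply continuity_pt_plus. apply IHn; intros; apply H; lia. apply H; lia. Qed.

Lemma cont_eps f x : continuity_pt f x -> forall eps, 0 < eps -> exists del, 0 < del /\
  forall y, Rabs (y - x) < del -> Rabs (f y - f x) < eps.
Proof. intros Hf eps Heps. destruct (Hf eps Heps) as [del [Hdel H]].
  exists del; split; auto. intros y Hy. destruct (Req_dec y x).
  - subst. rewrite Rminus_diag, Rabs_R0; auto.
  - apply (H y). split; [split; [exact I | intro E; apply H0; auto] | exact Hy].
Qed.

Section Cont.
Variables (a1 a2 n11 n12 n21 n22 : R).
Variable t : R.
Hypothesis HS : posS a1 a2 n11 n12 n21 n22 t.

Lemma cont_all :
  continuity_pt (s11 a1 n11 n21) t /\ continuity_pt (s12 a1 a2 n11 n12 n21 n22) t /\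
  continuity_pt (s22 a2 n12 n22) t /\
  continuity_pt (r11 a1 a2 n11 n12 n21 n22) t /\ continuity_pt (r12 a1 a2 n11 n12 n21 n22) t /\
  continuity_pt (r22 a1 a2 n11 n12 n21 n22) t /\ continuity_pt (i11 a1 a2 n11 n12 n21 n22) t /\
  continuity_pt (i12 a1 a2 n11 n12 n21 n22) t /\ continuity_pt (i22 a1 a2 n11 n12 n21 n22) t.
Proof.
  destruct (R_facts a1 a2 n11 n12 n21 n22 t HS) as [Hs [Ht _]].
  destruct HS as [P1 [P2 P3]].
  assert (C1 : continuity_pt (s11 a1 n11 n21) t) by (unfold s11; cont).
  assert (C2 : continuity_pt (s12 a1 a2 n11 n12 n21 n22) t) by (unfold s12; cont).
  assert (C3 : continuity_pt (s22 a2 n12 n22) t) by (unfold s22; cont).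
  assert (Cd : continuity_pt (dS a1 a2 n11 n12 n21 n22) t) by (unfold dS; cont).
  assert (Cs : continuity_pt (sig a1 a2 n11 n12 n21 n22) t) by (unfold sig; apply cont_sqrt; auto; lra).
  assert (Ct : continuity_pt (tau a1 a2 n11 n12 n21 n22) t).
  { unfold tau; apply cont_sqrt. cont. lra. }
  assert (Cts : continuity_pt (fun s => tau a1 a2 n11 n12 n21 n22 s * sig a1 a2 n11 n12 n21 n22 s) t) by cont.
  assert (Hts : tau a1 a2 n11 n12 n21 n22 t * sig a1 a2 n11 n12 n21 n22 t <> 0) by nra.
  repeat split; auto.
  - unfold r11; apply cont_div; [cont|auto|lra].
  - unfold r12; apply cont_div; [cont|auto|lra].
  - unfold r22; apply cont_div; [cont|auto|lra].
  - unfold i11; apply cont_div; [cont|auto|auto].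
  - unfold i12; apply cont_div; [cont|auto|auto].
  - unfold i22; apply cont_div; [cont|auto|auto].
Qed.

Lemma cont_Phi a X : continuity_pt (fun s => mdist2 X (back (PhiA a1 a2 n11 n12 n21 n22 s a))) t.
Proof. destruct cont_all as [C1 [C2 [C3 [C4 [C5 [C6 [C7 [C8 C9]]]]]]]].
  unfold mdist2, back, PhiA; cbn [x0 x1 x2 e11 e12 e21 e22]. cont. Qed.

Lemma cont_Psi b X : continuity_pt (fun s => mdist2 X (back (PsiB a1 a2 n11 n12 n21 n22 s b))) t.
Proof. destruct cont_all as [C1 [C2 [C3 [C4 [C5 [C6 [C7 [C8 C9]]]]]]]].
  unfold mdist2, back, PsiB, cc1, cc2; cbn [x0 x1 x2 e11 e12 e21 e22]. cont. Qed.
End Cont.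

Section Zero.
Variables (a1 a2 n11 n12 n21 n22 : R).
Lemma vals0 : sig a1 a2 n11 n12 n21 n22 0 = 1 /\ tau a1 a2 n11 n12 n21 n22 0 = 2 /\
  s11 a1 n11 n21 0 = 1 /\ s12 a1 a2 n11 n12 n21 n22 0 = 0 /\ s22 a2 n12 n22 0 = 1.
Proof.
  assert (A1 : s11 a1 n11 n21 0 = 1) by (unfold s11; ring).
  assert (A2 : s12 a1 a2 n11 n12 n21 n22 0 = 0) by (unfold s12; ring).
  assert (A3 : s22 a2 n12 n22 0 = 1) by (unfold s22; ring).
  assert (S : sig a1 a2 n11 n12 n21 n22 0 = 1).
  { unfold sig, dS. rewrite A1, A2, A3. replace (1 * 1 - 0 * 0) with 1 by ring. apply sqrt_1. }
  split; auto. split; auto.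
  unfold tau. rewrite A1, A3, S. replace (1 + 1 + 2 * 1) with (2 * 2) by ring. apply sqrt_square; lra.
Qed.

Lemma Phi0 a : PhiA a1 a2 n11 n12 n21 n22 0 a = a.
Proof. destruct vals0 as [S [T [A1 [A2 A3]]]].
  unfold PhiA, r11, r12, r22. rewrite S, T, A1, A2, A3.
  apply V3_eq; cbn [x0 x1 x2]; field. Qed.

Lemma Psi0 b : PsiB a1 a2 n11 n12 n21 n22 0 b = b.
Proof. destruct vals0 as [S [T [A1 [A2 A3]]]].
  unfold PsiB, i11, i12, i22, cc1, cc2. rewrite S, T, A1, A2, A3.
  apply V3_eq; cbn [x0 x1 x2]; field. Qed.
End Zero.

Theorem proposition7p9 (p q : nat) (M : nat -> nat -> R) :
  nonneg_mat p q M ->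
  psd_rank_eq p q M 2 ->
  rank_eq p q M 3 ->
  quotient_GL2_connected p q (SF p q M).
Proof.
  intros _ _ Hrk. unfold quotient_GL2_connected.
  intros [U [V [HU [HV [IU [IV [[P [HP UP]] [[Q [HQ VQ]] [Hcov Hdis]]]]]]]]].
  destruct Hrk as [[js [Hlen [Hlt Hind]]] _].
  destruct js as [|j1 [|j2 [|j3 [|]]]]; simpl in Hlen; try lia.
  inversion Hlt as [|? ? Hj1 Hlt2]; subst. inversion Hlt2 as [|? ? Hj2 Hlt3]; subst.
  inversion Hlt3 as [|? ? Hj3 _]; subst.
  destruct P as [A0 B0]. destruct Q as [A0' B0'].
  destruct (normalize p q M A0 B0 HP (fun X H => A_span p q M j1 j2 j3 Hind Hj1 Hj2 Hj3 A0 B0 X HP H))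
    as [gP [HgP NP]].
  destruct (normalize p q M A0' B0' HQ (fun X H => A_span p q M j1 j2 j3 Hind Hj1 Hj2 Hj3 A0' B0' X HQ H))
    as [gQ [HgQ NQ]].
  set (A := fst (act gP (A0, B0))). set (B := snd (act gP (A0, B0))).
  set (A' := fst (act gQ (A0', B0'))). set (B' := snd (act gQ (A0', B0'))).
  assert (HP1 : SF p q M (A, B)) by (apply act_SF; auto).
  assert (HQ1 : SF p q M (A', B')) by (apply act_SF; auto).
  assert (UP1 : U (A, B)) by (apply IU; auto).
  assert (VQ1 : V (A', B')) by (apply IV; auto).
  fold A in NP. fold A' in NQ.
  clearbody A B A' B'. clear HP HQ UP VQ.
  destruct (F_exists p q M j1 j2 j3 Hind Hj1 Hj2 Hj3 A B A' B' HP1 HQ1 NP NQ)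
    as [Fm [F0 [F1 [F2 [HFA HFB]]]]].
  destruct Fm as [[c00 c01 c02] [c10 c11 c12] [c20 c21 c22]]. cbn [x0 col0 col1 col2] in F0, F1, F2. subst c00 c10 c20.
  set (FA := Fa c01 c02 c11 c12 c21 c22). set (FB := FTb c01 c02 c11 c12 c21 c22).
  assert (HA' : forall i, (i < p)%nat -> conv (A' i) = FA (conv (A i))).
  { intros i Hi. rewrite HFA by auto. unfold FA, Fa, mtv3, dot3; apply V3_eq; cbn [x0 x1 x2 col0 col1 col2]; ring. }
  assert (HB' : forall j, (j < q)%nat -> conv (B j) = FB (conv (B' j))).
  { intros j Hj. rewrite HFB by auto. unfold FB, FTb, mv3, vadd, vscal; apply V3_eq; cbn [x0 x1 x2 col0 col1 col2]; ring. }
  clear HFA HFB.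
  pose proof HP1 as [SA [SB [ZA [ZB SM]]]]. pose proof HQ1 as [SA' [SB' [ZA' [ZB' SM']]]].
  assert (Hpos : forall t, 0 <= t <= 1 -> posS c01 c02 c11 c12 c21 c22 t).
  { intros t Ht. apply posS_of. apply (qS_pos c01 c02 c11 c12 c21 c22 q (fun j => conv (B j)) (fun j => conv (B' j))); auto.
    - intros j Hj. split; [apply psd2_conv; auto|]. split; [apply psd2_conv; auto|]. apply HB'; auto.
    - intros X HX. apply (B_span p q M j1 j2 j3 Hind Hj1 Hj2 Hj3 A B X HP1 HX). }
  set (gam := fun s : R =>
    ((fun i => if Nat.ltb i p then back (PhiA c01 c02 c11 c12 c21 c22 s (conv (A i))) else zero2),
     (fun j => if Nat.ltb j q then back (PsiB c01 c02 c11 c12 c21 c22 s (conv (B j))) else zero2)) : fact2).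
  assert (Hgam : forall t, 0 <= t <= 1 -> SF p q M (gam t)).
  { intros t Ht. pose proof (Hpos t Ht) as HS. unfold gam, SF. split; [|split; [|split; [|split]]].
    - intros i Hi. rewrite (proj2 (Nat.ltb_lt i p) Hi). apply psd2_inK. apply A_valid; auto.
      apply psd2_conv; auto. fold FA. rewrite <- HA' by auto. apply psd2_conv; auto.
    - intros j Hj. rewrite (proj2 (Nat.ltb_lt j q) Hj). apply psd2_inK. apply (B_valid c01 c02 c11 c12 c21 c22 t _ (conv (B' j))); auto.
      apply psd2_conv; auto. apply psd2_conv; auto.
    - intros i Hi. destruct (Nat.ltb_spec i p); [lia|auto].
    - intros j Hj. destruct (Nat.ltb_spec j q); [lia|auto].
    - intros i j Hi Hj. rewrite (proj2 (Nat.ltb_lt i p) Hi), (proj2 (Nat.ltb_lt j q) Hj).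
      rewrite inner2_back, dot_pres by auto. apply (Mij_dot p q M A B i j HP1 Hi Hj). }
  assert (Hg0 : gam 0 = (A, B)).
  { unfold gam. f_equal; apply functional_extensionality.
    - intros i. destruct (Nat.ltb_spec i p).
      + rewrite Phi0. apply back_conv. apply psd2_sym; auto.
      + symmetry; apply ZA; auto.
    - intros j. destruct (Nat.ltb_spec j q).
      + rewrite Psi0. apply back_conv. apply psd2_sym; auto.
      + symmetry; apply ZB; auto. }
  destruct (end1 c01 c02 c11 c12 c21 c22 (Hpos 1 ltac:(lra))) as [g [Hg [EA EB]]].
  assert (Hg1 : gam 1 = act g (A', B')).
  { unfold gam, act; cbn [fst snd]. f_equal; apply functional_extensionality.
    - intros i. destruct (Nat.ltb_spec i p).
      + rewrite <- (back_conv (A' i)) by (apply psd2_sym; auto). rewrite HA' by auto.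
        unfold FA. rewrite EA. reflexivity.
      + rewrite ZA' by auto. symmetry; apply cong_zero'.
    - intros j. destruct (Nat.ltb_spec j q).
      + rewrite <- (back_conv (B' j)) by (apply psd2_sym; auto). rewrite EB.
        rewrite <- HB' by auto. reflexivity.
      + rewrite ZB' by auto. symmetry; apply cong_zero. }
  assert (Hcont : forall t, 0 <= t <= 1 -> forall eps, 0 < eps -> exists del, 0 < del /\
     forall s, 0 <= s <= 1 -> Rabs (s - t) < del -> fdist p q (gam t) (gam s) < eps).
  { intros t Ht eps Heps. pose proof (Hpos t Ht) as HS.
    assert (C : continuity_pt (fun s => fdist p q (gam t) (gam s)) t).
    { unfold fdist, gam; cbn [fst snd]. apply continuity_pt_plus; apply cont_fsum; intros k Hk.
      - destruct (Nat.ltb k p). apply cont_Phi; auto. apply cont_const.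
      - destruct (Nat.ltb k q). apply cont_Psi; auto. apply cont_const. }
    destruct (cont_eps _ _ C eps Heps) as [del [Hdel Hd]].
    exists del; split; auto. intros s Hs Hst. specialize (Hd s Hst).
    assert (Z : fdist p q (gam t) (gam t) = 0).
    { unfold fdist. rewrite (fsum_ext p _ (fun _ => 0)), (fsum_ext q _ (fun _ => 0)), !fsum_zero; [ring| |];
      intros; unfold mdist2; rewrite !Rminus_diag, Rabs_R0; ring. }
    rewrite Z, Rminus_0_r in Hd. pose proof (Rle_abs (fdist p q (gam t) (gam s))). lra. }
  assert (U1 : U (gam 1)).
  { apply (path_lemma p q (SF p q M) U V gam HU HV Hcov Hdis Hgam Hcont). rewrite Hg0; auto. }
  assert (V1 : V (gam 1)) by (rewrite Hg1; apply IV; auto).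
  apply (Hdis (gam 1)); auto. apply Hgam; lra.
Qed.
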